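(* Fix $\omega\in(0,1)$, $\gamma\in(0,1)$, $\kappa\in(0,1)$, $\Delta\in(0,e-2)$, $G\ge0$, and an integer $\hat\tau_1\ge1$ with $\hat\tau_1^\omega>\frac{1}{1-\ln(2+\Delta)}$. Let $c\ge\frac{\ln(2+\Delta)+1/\hat\tau_1^\omega}{1-\ln(2+\Delta)-1/\hat\tau_1^\omega}$, and let $t_0\ge\hat\tau_1$ be an integer such that $t_1:=t_0+\frac{2c}{\kappa}t_0^\omega$ is an integer. Let $\gamma'=\frac{1+\gamma}{2}$, $\xi=\frac{1-\gamma}{4}$, and define $X_{t_0}=G$ and $X_{t+1}=(1-t^{-\omega})X_t+t^{-\omega}\gamma'G$ for $t\ge t_0$. Then for every $t\ge t_1$, $$X_t\le\Big(\gamma'+\frac{2}{2+\Delta}\xi\Big)G.$$ *)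

(* Defs.v *)
From Stdlib Require Import Reals.
Open Scope R_scope.

Definition rpow (t : nat) (a : R) : R := Rpower (INR t) a.

(* Main.v *)
Require Import Defs.
From Stdlib Require Import Reals Lra Lia.
Open Scope R_scope.

Lemma my_exp_le x y : x <= y -> exp x <= exp y.
Proof. intros H; destruct (Rle_lt_or_eq_dec _ _ H) as [h|h]; [left; now apply exp_increasing | subst; lra]. Qed.

Lemma my_ln_le x y : 0 < x -> x <= y -> ln x <= ln y.
Proof. intros H0 H; destruct (Rle_lt_or_eq_dec _ _ H) as [h|h]; [left; now apply ln_increasing | subst; lra]. Qed.

Lemma ln_nonneg x : 1 <= x -> 0 <= ln x.
Proof. intros H. rewrite <- ln_1. apply my_ln_le; lra. Qed.

Lemma INR_ge1 (n : nat) : (1 <= n)%nat -> 1 <= INR n.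
Proof. intros H. apply le_INR in H. simpl in H. lra. Qed.

Theorem lemma5
  (omega gamma kappa Delta G c : R) (tau1 t0 t1 : nat) (X : nat -> R)
  (Homega : 0 < omega < 1) (Hgamma : 0 < gamma < 1) (Hkappa : 0 < kappa < 1)
  (HDelta : 0 < Delta < exp 1 - 2) (HG : 0 <= G)
  (Htau1 : (1 <= tau1)%nat)
  (Htau1w : rpow tau1 omega > 1 / (1 - ln (2 + Delta)))
  (Hc : c >= (ln (2 + Delta) + 1 / rpow tau1 omega)
             / (1 - ln (2 + Delta) - 1 / rpow tau1 omega))
  (Ht0 : (tau1 <= t0)%nat)
  (Ht1 : INR t1 = INR t0 + (2 * c / kappa) * rpow t0 omega)
  (HX0 : X t0 = G)
  (HXrec : forall t : nat, (t0 <= t)%nat ->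
      X (S t) = (1 - rpow t (- omega)) * X t
                + rpow t (- omega) * ((1 + gamma) / 2) * G) :
  forall t : nat, (t1 <= t)%nat ->
    X t <= ((1 + gamma) / 2 + 2 / (2 + Delta) * ((1 - gamma) / 4)) * G.
Proof.
  set (LL := ln (2 + Delta)) in *.
  set (TT := rpow tau1 omega) in *.
  assert (HL0 : 0 < LL).
  { unfold LL. rewrite <- ln_1. apply ln_increasing; lra. }
  assert (HL1 : LL < 1).
  { unfold LL. rewrite <- (ln_exp 1). apply ln_increasing; lra. }
  assert (HT : 0 < TT) by (unfold TT, rpow, Rpower; apply exp_pos).
  assert (HT1 : 1 / TT < 1 - LL).
  { assert (1 / (1 - LL) < TT) by lra.
    apply (Rmult_lt_reg_r TT); [lra|].
    replace (1 / TT * TT) with 1 by (field; repeat split; intro; nra).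
    apply (Rmult_lt_reg_r (/ (1 - LL))). apply Rinv_0_lt_compat; lra.
    replace (1 * / (1 - LL)) with (1 / (1 - LL)) by lra.
    replace ((1 - LL) * TT * / (1 - LL)) with TT by (field; repeat split; intro; nra). lra. }
  assert (HcL : c / (1 + c) >= LL /\ 0 < c).
  { assert (Hd : 0 < 1 - LL - 1 / TT) by lra.
    assert (Hp : 0 < 1 / TT) by (unfold Rdiv; rewrite Rmult_1_l; now apply Rinv_0_lt_compat).
    assert (Hc' : c * (1 - LL - 1 / TT) >= LL + 1 / TT).
    { apply Rge_trans with ((LL + 1/TT) / (1 - LL - 1/TT) * (1 - LL - 1/TT)).
      apply Rle_ge, Rmult_le_compat_r; lra.
      right; field. assert (HTT: 1/TT*TT = 1) by (field; lra). split; intro; nra. }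
    assert (0 < c) by nra.
    split; [|lra].
    apply Rle_ge. apply (Rmult_le_reg_r (1 + c)); [lra|].
    replace (c / (1 + c) * (1 + c)) with c by (field; repeat split; intro; nra). nra. }
  destruct HcL as [HcL Hc0].
  set (k := 2 * c / kappa) in *.
  assert (Hk : c <= k).
  { unfold k. apply (Rmult_le_reg_r kappa); [lra|].
    replace (2 * c / kappa * kappa) with (2 * c) by (field; repeat split; intro; nra). nra. }
  assert (Ht01 : (1 <= t0)%nat) by lia.
  assert (Ht0R : 1 <= INR t0) by now apply INR_ge1.
  set (a := rpow t0 omega) in *.
  assert (Ha : 0 < a) by (unfold a, rpow, Rpower; apply exp_pos).
  assert (Hat : a <= INR t0).
  { unfold a, rpow, Rpower. rewrite <- (exp_ln (INR t0)) at 2 by lra.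
    apply my_exp_le. pose proof (ln_nonneg _ Ht0R). nra. }
  assert (Htt : (t0 <= t1)%nat).
  { apply INR_le. rewrite Ht1. fold k a. assert (0 < k) by lra. nra. }
  set (n := (t1 - t0)%nat).
  assert (Hn : t1 = (t0 + n)%nat) by lia.
  set (q := rpow t1 (- omega)) in *.
  assert (Ht1R : 1 <= INR t1) by (apply INR_ge1; lia).
  assert (Hnq : LL <= INR n * q).
  { assert (HnR : INR n = k * a) by (unfold n; rewrite minus_INR by lia; rewrite Ht1; fold k a; ring).
    assert (Hpow : rpow t1 omega <= (1 + k) * a).
    { unfold rpow, Rpower.
      assert (Hle : INR t1 <= (1 + k) * INR t0) by (rewrite Ht1; fold k a; nra).
      assert (ln (INR t1) <= ln (1 + k) + ln (INR t0)).
      { rewrite <- ln_mult by lra. apply my_ln_le; lra. }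
      assert (0 <= ln (1 + k)) by (apply ln_nonneg; lra).
      apply Rle_trans with (exp (ln (1 + k) + omega * ln (INR t0))).
      apply my_exp_le. nra.
      rewrite exp_plus, exp_ln by lra. fold (Rpower (INR t0) omega). apply Rle_refl. }
    assert (Hq : q = / rpow t1 omega).
    { unfold q, rpow, Rpower. rewrite <- exp_Ropp. f_equal; ring. }
    assert (Hp1 : 0 < rpow t1 omega) by (unfold rpow, Rpower; apply exp_pos).
    rewrite HnR, Hq.
    apply Rle_trans with (k / (1 + k)).
    { apply Rle_trans with (c / (1 + c)); [lra|].
      apply (Rmult_le_reg_r ((1 + c) * (1 + k))); [nra|].
      replace (c / (1 + c) * ((1 + c) * (1 + k))) with (c * (1 + k)) by (field; repeat split; intro; nra).
      replace (k / (1 + k) * ((1 + c) * (1 + k))) with (k * (1 + c)) by (field; repeat split; intro; nra).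
      nra. }
    apply (Rmult_le_reg_r ((1 + k) * rpow t1 omega)); [nra|].
    replace (k / (1 + k) * ((1 + k) * rpow t1 omega)) with (k * rpow t1 omega) by (field; repeat split; intro; nra).
    replace (k * a * / rpow t1 omega * ((1 + k) * rpow t1 omega)) with (k * a * (1 + k)) by (field; repeat split; intro; nra).
    nra. }
  set (p := fun s : nat => rpow s (- omega)).
  assert (Hp01 : forall s, (1 <= s)%nat -> 0 < p s <= 1).
  { intros s Hs. unfold p, rpow, Rpower. split; [apply exp_pos|].
    rewrite <- exp_0. apply my_exp_le. pose proof (ln_nonneg _ (INR_ge1 _ Hs)). nra. }
  assert (Hpmono : forall s, (t0 <= s <= t1)%nat -> q <= p s).
  { intros s Hs. unfold q, p, rpow, Rpower. apply my_exp_le.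
    assert (1 <= INR s) by (apply INR_ge1; lia).
    assert (ln (INR s) <= ln (INR t1)) by (apply my_ln_le; [lra| apply le_INR; lia]).
    nra. }
  set (g := (1 + gamma) / 2) in *.
  set (Y := fun s => X s - g * G).
  assert (HY : forall s, (t0 <= s)%nat -> Y (S s) = (1 - p s) * Y s).
  { intros s Hs. unfold Y, p. rewrite HXrec by exact Hs. ring. }
  assert (HY0 : Y t0 = (1 - gamma) / 2 * G) by (unfold Y, g; rewrite HX0; field).
  assert (HY0p : 0 <= Y t0) by (rewrite HY0; nra).
  assert (HA : forall m, (m <= n)%nat -> 0 <= Y (t0 + m)%nat <= Y t0 * exp (- (INR m * q))).
  { induction m as [|m IH]; intros Hm.
    - rewrite Nat.add_0_r. simpl. rewrite Rmult_0_l, Ropp_0, exp_0. lra.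
    - specialize (IH ltac:(lia)).
      replace (t0 + S m)%nat with (S (t0 + m)) by lia.
      rewrite HY by lia.
      pose proof (Hp01 (t0 + m)%nat ltac:(lia)).
      pose proof (Hpmono (t0 + m)%nat ltac:(lia)).
      split; [nra|].
      rewrite S_INR.
      assert (1 - p (t0 + m)%nat <= exp (- q)).
      { pose proof (exp_ineq1_le (- q)). lra. }
      replace (- ((INR m + 1) * q)) with (- (INR m * q) + - q) by ring.
      rewrite exp_plus.
      pose proof (exp_pos (- (INR m * q))). pose proof (exp_pos (- q)).
      apply Rle_trans with (exp (- q) * Y (t0 + m)%nat).
      apply Rmult_le_compat_r; lra.
      nra. }
  assert (HB : forall j, 0 <= Y (t1 + j)%nat <= Y t1).
  { induction j as [|j IH].
    - rewrite Nat.add_0_r. split; [|lra]. rewrite Hn. apply (HA n); lia.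
    - replace (t1 + S j)%nat with (S (t1 + j)) by lia.
      rewrite HY by lia.
      pose proof (Hp01 (t1 + j)%nat ltac:(lia)). nra. }
  intros t Ht.
  replace t with (t1 + (t - t1))%nat by lia.
  destruct (HB (t - t1)%nat) as [_ HB1].
  destruct (HA n (Nat.le_refl _)) as [_ HA1].
  rewrite <- Hn in HA1.
  assert (Hexp : exp (- (INR n * q)) <= / (2 + Delta)).
  { rewrite <- (exp_ln (2 + Delta)) by lra. rewrite <- exp_Ropp.
    apply my_exp_le. fold LL. lra. }
  assert (Y (t1 + (t - t1))%nat <= (1 - gamma) / 2 * G * / (2 + Delta)).
  { rewrite <- HY0. apply Rle_trans with (Y t1); [lra|].
    apply Rle_trans with (1 := HA1). apply Rmult_le_compat_l; lra. }
  unfold Y in H. fold g.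
  replace ((g + 2 / (2 + Delta) * ((1 - gamma) / 4)) * G)
    with (g * G + (1 - gamma) / 2 * G * / (2 + Delta)) by (field; repeat split; intro; nra).
  lra.
Qed.
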